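(* Suppose $J_1=J_2=J>0$ and $\Delta<1$. There exists a constant $c\in(0,\infty)$ (independent of $N$, $\theta$, $\Delta$) such that for every configuration $\mathbf S$ of the form $\mathbf S_{\boldsymbol r}=(\cos(\theta+\vartheta_{\boldsymbol r}),\sin(\theta+\vartheta_{\boldsymbol r}))$ with $\vartheta_{\boldsymbol r}\in(-\pi,\pi]$ and $|\mathbf S_{\boldsymbol r}-\boldsymbol e(\theta)|<\Delta$ for all $\boldsymbol r\in\mathbb T_N$, $$\bigl|\mathcal H_N(\mathbf S)+J|\mathbb T_N|-J\,G_{N,\theta}(\boldsymbol\vartheta)\bigr|\le cJ|\mathbb T_N|\Delta^3.$$
   Context: Torus model: $N$ even, $\mathbb T_N=(\mathbb Z/N\mathbb Z)^2$; $\langle \boldsymbol r,\boldsymbol r+\boldsymbol e_1\rangle$ is an $x$-edge if $r_1$ is even, a $z$-edge otherwise; $\langle\boldsymbol r,\boldsymbol r+\boldsymbol e_2\rangle$ is an $x$-edge if $r_2$ is even, a $z$-edge otherwise. $\mathcal H_N(\mathbf S)=-J\sum_{x\text{-edges}}S^x_{\boldsymbol r}S^x_{\boldsymbol r'}-J\sum_{z\text{-edges}}S^z_{\boldsymbol r}S^z_{\boldsymbol r'}$ for unit vectors $\mathbf S_{\boldsymbol r}=(S^x_{\boldsymbol r},S^z_{\boldsymbol r})$. $\boldsymbol e(\theta)=(\cos\theta,\sin\theta)$. For $\boldsymbol\vartheta=(\vartheta_{\boldsymbol r})$, $G_{N,\theta}(\boldsymbol\vartheta)=\frac12\sum_{x\text{-edges}\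 \langle\boldsymbol r,\boldsymbol r'\rangle}(\vartheta_{\boldsymbol r}-\vartheta_{\boldsymbol r'})^2\sin^2\theta+\frac12\sum_{z\text{-edges}\ \langle\boldsymbol r,\boldsymbol r'\rangle}(\vartheta_{\boldsymbol r}-\vartheta_{\boldsymbol r'})^2\cos^2\theta$. *)

(* Defs.v *)
From HB Require Import structures.
From mathcomp Require Import all_boot all_order all_algebra.
From mathcomp Require Import all_classical all_reals all_analysis.
Set Implicit Arguments. Unset Strict Implicit. Unset Printing Implicit Defensive.
Import Order.TTheory GRing.Theory Num.Theory.
Local Open Scope ring_scope.

Definition site (N : nat) := ('I_N * 'I_N)%type.

Definition nb1 N (r : site N) : site N := (ordS r.1, r.2).
Definition nb2 N (r : site N) : site N := (r.1, ordS r.2).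

Definition xedge1 N (r : site N) : bool := ~~ odd r.1.
Definition xedge2 N (r : site N) : bool := ~~ odd r.2.

(* Spins are pairs (S^x, S^z). *)
Definition bond (R : realType) (isx : bool) (s s' : R * R) : R :=
  if isx then s.1 * s'.1 else s.2 * s'.2.

Definition HN (R : realType) N (J : R) (S : site N -> R * R) : R :=
  - J * \sum_(r : site N)
      (bond (xedge1 r) (S r) (S (nb1 r)) + bond (xedge2 r) (S r) (S (nb2 r))).

Definition gw (R : realType) (isx : bool) (theta : R) : R :=
  if isx then (sin theta) ^+ 2 else (cos theta) ^+ 2.

Definition GN (R : realType) N (theta : R) (vt : site N -> R) : R :=
  2^-1 * \sum_(r : site N)
     (gw (xedge1 r) theta * (vt r - vt (nb1 r)) ^+ 2
      + gw (xedge2 r) theta * (vt r - vt (nb2 r)) ^+ 2).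

Definition evec (R : realType) (theta : R) : R * R := (cos theta, sin theta).

Definition dist2 (R : realType) (a b : R * R) : R :=
  Num.sqrt ((a.1 - b.1) ^+ 2 + (a.2 - b.2) ^+ 2).

(* Main.v *)
Require Import Defs.
From HB Require Import structures.
From mathcomp Require Import all_boot all_order all_algebra.
From mathcomp Require Import all_classical all_reals all_analysis.
From mathcomp Require Import ring lra.
Import Order.TTheory GRing.Theory Num.Theory.
Import numFieldNormedType.Exports.
Local Open Scope ring_scope.

Section Helpers.
Local Set Implicit Arguments. Local Unset Strict Implicit.
Variable R : realType.
Implicit Types x y : R.

Lemma sqrn (y : R) : y ^+ 2 = `|y| ^+ 2.
Proof. by rewrite real_normK // num_real. Qed.

Lemma mvt0 (f df : R -> R) x : (forall y, is_derive y 1 f (df y)) ->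
  exists c, `|c| <= `|x| /\ f x - f 0 = df c * x.
Proof.
move=> fd.
have cf : continuous f.
  by move=> y; apply/differentiable_continuous/derivable1_diffP; apply: ex_derive.
have [x0|x0] := leP 0 x.
  have [c cI ->] := MVT_segment x0 (fun y _ => fd y) (continuous_subspaceT cf).
  exists c; split; last by rewrite subr0.
  move: cI; rewrite in_itv /= => /andP[c0 cx].
  by rewrite !ger0_norm.
have [c cI E] := MVT_segment (ltW x0) (fun y _ => fd y) (continuous_subspaceT cf).
exists c; split.
  move: cI; rewrite in_itv /= => /andP[c0 cx].
  by rewrite !ler0_norm // ?lerN2 // ltW.
by rewrite -opprB E sub0r mulrN opprK.
Qed.

Lemma abs_sin_le y : `|sin y| <= `|y|.
Proof.
have [c [cy E]] := mvt0 y (@is_derive_sin R).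
move: E; rewrite sin0 subr0 => ->.
rewrite normrM -[X in _ <= X]mul1r ler_pM //; exact: cos_max.
Qed.

Lemma cos1_le y : `|cos y - 1| <= y ^+ 2.
Proof.
have [c [cy E]] := mvt0 y (@is_derive_cos R).
move: E; rewrite cos0 => ->.
rewrite normrM normrN sqrn expr2 ler_pM //.
exact: le_trans (abs_sin_le c) cy.
Qed.

Lemma sin3 y : `|sin y - y| <= `|y| ^+ 3.
Proof.
have D : forall z : R, is_derive z 1 (fun z => sin z - z) (cos z - 1).
  move=> z; apply: is_deriveB.
have [c [cy E]] := mvt0 y D.
move: E; rewrite sin0 !subr0 => ->.
rewrite normrM exprSr ler_pM //.
apply: le_trans (cos1_le c) _.
by rewrite sqrn lerXn2r // ?nnegrE.
Qed.

Lemma cos4 y : `|cos y - 1 + y ^+ 2 / 2| <= y ^+ 4.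
Proof.
have D : forall z : R, is_derive z 1 (fun z => cos z - 1 + z ^+ 2 / 2) (- sin z + z).
  move=> z.
  have -> : (fun z => cos z - 1 + z ^+ 2 / 2) =
     ((@cos R - cst 1) + (2^-1 : R) \*: (@id R * @id R)).
    by apply/funext => w /=; rewrite mulrC expr2.
  apply: is_derive_eq.
  have E : forall w : R, w%:A = w := fun w => mulr1 w.
  have E2 : forall w : R, 2^-1 *: w = 2^-1 * w := fun w => erefl.
  by rewrite /= subr0 !E E2; congr (_ + _); field.
have [c [cy E]] := mvt0 y D.
move: E; rewrite cos0 expr0n /= mul0r addr0 subrr => /eqP; rewrite subr0 => /eqP ->.
rewrite normrM (_ : y ^+ 4 = `|y| ^+ 3 * `|y|); last first.
  by rewrite -exprSr -normrX ger0_norm // exprn_even_ge0.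
rewrite ler_pM // addrC.
rewrite -normrN opprB; apply: le_trans (sin3 c) _.
by rewrite lerXn2r // ?nnegrE.
Qed.
Lemma cos_abs_le (x y : R) : `|x| <= `|y| -> `|y| <= pi -> cos y <= cos x.
Proof.
move=> xy ypi.
rewrite -(cos_norm x) -(cos_norm y) leNgt.
have i0 : `|x| \in `[0, pi] by rewrite in_itv /= normr_ge0 (le_trans xy).
have i1 : `|y| \in `[0, pi] by rewrite in_itv /= normr_ge0.
by rewrite (ltr_cos i1 i0) -leNgt.
Qed.

Lemma abs_le_sin (a : R) : `|a| <= pi -> 2^-1 < cos a -> `|a| <= 2 * `|sin a|.
Proof.
move=> api ca.
have [c [ca' E]] := mvt0 a (@is_derive_sin R).
move: E; rewrite sin0 subr0 => ->.
have cc : 2^-1 < cos c by exact: (lt_le_trans ca (cos_abs_le ca' api)).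
rewrite normrM (gtr0_norm (lt_trans _ cc)) ?invr_gt0 //.
have := normr_ge0 a; nra.
Qed.

Lemma dist_id (th a : R) :
  (cos (th + a) - cos th) ^+ 2 + (sin (th + a) - sin th) ^+ 2 = 2 - 2 * cos a.
Proof.
rewrite cosD sinD.
have h1 := cos2Dsin2 th; have h2 := cos2Dsin2 a.
transitivity ((cos th ^+ 2 + sin th ^+ 2) * ((cos a - 1) ^+ 2 + sin a ^+ 2)); first by ring.
rewrite h1 mul1r; nra.
Qed.


Lemma site_bounds (th a D : R) : - pi < a <= pi -> D < 1 ->
  dist2 (evec (th + a)) (evec th) < D ->
  0 < D /\ [/\ `|a| <= 2 * D, `|sin a| <= 2 * D, `|cos a - 1| <= 4 * D ^+ 2,
      `|sin a - a| <= 8 * D ^+ 3 & `|cos a - 1 + a ^+ 2 / 2| <= 16 * D ^+ 3].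
Proof.
move=> /andP[a1 a2] D1; rewrite /dist2 /evec /= dist_id.
set x := 2 - 2 * cos a => hx.
have x0 : 0 <= x by rewrite /x; have := cos_le1 a; lra.
have sq0 := sqrtr_ge0 x.
have sqx := sqr_sqrtr x0.
have D0 : 0 < D by apply: le_lt_trans sq0 hx.
have xD : x < D ^+ 2 by rewrite -sqx; nra.
have C1 : 1 - cos a < D ^+ 2 / 2 by move: xD; rewrite /x; lra.
have C0 : 0 <= 1 - cos a by have := cos_le1 a; lra.
have ca : 2^-1 < cos a by nra.
have S2 : sin a ^+ 2 < D ^+ 2.
  rewrite sin2cos2; have := cos_le1 a; have := cos_geN1 a; nra.
have SD : `|sin a| < D.
  rewrite -(ltr_pXn2r (n := 2)) ?nnegrE ?(ltW D0) // -sqrn; nra.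
have api : `|a| <= pi by rewrite ler_norml; lra.
have aD : `|a| <= 2 * D by have := abs_le_sin api ca; nra.
have a0 := normr_ge0 a.
split => //; split => //.
- by nra.
- by rewrite distrC ger0_norm; nra.
- apply: le_trans (sin3 a) _.
  rewrite (_ : 8 * D ^+ 3 = (2 * D) ^+ 3); last by ring.
  by rewrite lerXn2r // nnegrE; nra.
- apply: le_trans (cos4 a) _.
  have a4 : `|a| ^+ 4 <= (2 * D) ^+ 4 by rewrite lerXn2r // nnegrE; nra.
  have -> : a ^+ 4 = `|a| ^+ 4 by rewrite -normrX ger0_norm // exprn_even_ge0.
  apply: le_trans a4 _.
  have D3 : 0 < D ^+ 3 by rewrite exprn_gt0.
  rewrite (_ : (2 * D) ^+ 4 = 16 * D ^+ 3 * D); last by ring.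
  rewrite -[X in _ <= X]mulr1 ler_pM // ?ltW //.
  by rewrite mulr_gt0.
Qed.


Definition gg (c s : R) (isx : bool) (a : R) : R :=
  if isx then - c ^+ 2 / 2 + a ^+ 2 / 2 * (c ^+ 2 - s ^+ 2) + c * s * a
  else - s ^+ 2 / 2 - a ^+ 2 / 2 * (c ^+ 2 - s ^+ 2) - c * s * a.

Lemma gg_sum c s isx a : c ^+ 2 + s ^+ 2 = 1 -> gg c s isx a + gg c s (~~ isx) a = - 2^-1.
Proof.
move=> h; transitivity (- (c ^+ 2 + s ^+ 2) / 2); first by case: isx => /=; field.
by rewrite h; field.
Qed.

Definition XX (a b Sa Sb Ca Cb : R) := (Ca - 1 + a ^+ 2 / 2) + (Cb - 1 + b ^+ 2 / 2) + (Ca - 1) * (Cb - 1).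
Definition YY (a b Sa Sb Ca Cb : R) := (Sa - a) + (Sb - b) + (Ca - 1) * Sb + (Cb - 1) * Sa.
Definition ZZ (a b Sa Sb Ca Cb : R) := (Sa - a) * Sb + a * (Sb - b).

Lemma idx c s a b Sa Sb Ca Cb :
  - ((c * Ca - s * Sa) * (c * Cb - s * Sb)) - 2^-1 * s ^+ 2 * (a - b) ^+ 2
  - (gg c s true a + gg c s true b)
  = - c ^+ 2 * XX a b Sa Sb Ca Cb + c * s * YY a b Sa Sb Ca Cb - s ^+ 2 * ZZ a b Sa Sb Ca Cb.
Proof. by rewrite /gg /XX /YY /ZZ /=; field. Qed.

Lemma idz c s a b Sa Sb Ca Cb :
  - ((s * Ca + c * Sa) * (s * Cb + c * Sb)) - 2^-1 * c ^+ 2 * (a - b) ^+ 2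
  - (gg c s false a + gg c s false b)
  = - s ^+ 2 * XX a b Sa Sb Ca Cb - c * s * YY a b Sa Sb Ca Cb - c ^+ 2 * ZZ a b Sa Sb Ca Cb.
Proof. by rewrite /gg /XX /YY /ZZ /=; field. Qed.

Lemma nm (u v U V : R) : `|u| <= U -> `|v| <= V -> `|u * v| <= U * V.
Proof. move=> hu hv; rewrite normrM ler_pM //. Qed.

Lemma XYZ_bound (D a b Sa Sb Ca Cb : R) : 0 < D -> D < 1 ->
  [/\ `|a| <= 2 * D, `|Sa| <= 2 * D, `|Ca - 1| <= 4 * D ^+ 2,
      `|Sa - a| <= 8 * D ^+ 3 & `|Ca - 1 + a ^+ 2 / 2| <= 16 * D ^+ 3] ->
  [/\ `|b| <= 2 * D, `|Sb| <= 2 * D, `|Cb - 1| <= 4 * D ^+ 2,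
      `|Sb - b| <= 8 * D ^+ 3 & `|Cb - 1 + b ^+ 2 / 2| <= 16 * D ^+ 3] ->
  `|XX a b Sa Sb Ca Cb| + `|YY a b Sa Sb Ca Cb| + `|ZZ a b Sa Sb Ca Cb| <= 112 * D ^+ 3.
Proof.
move=> D0 D1 [a1 a2 a3 a4 a5] [b1 b2 b3 b4 b5].
have D3 : D ^+ 4 <= D ^+ 3.
  have := exprn_gt0 3 D0; rewrite exprSr; nra.
rewrite /XX /YY /ZZ.
have p1 := nm a3 b3. have p2 := nm a3 b2. have p3 := nm b3 a2.
have p4 := nm a4 b2. have p5 := nm a1 b4.
pose t1 := Ca - 1 + a ^+ 2 / 2. pose t2 := Cb - 1 + b ^+ 2 / 2.
have h1 := ler_normD (t1 + t2) ((Ca - 1) * (Cb - 1)).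
have h2 := ler_normD t1 t2.
have h3 := ler_normD (Sa - a + (Sb - b) + (Ca - 1) * Sb) ((Cb - 1) * Sa).
have h4 := ler_normD (Sa - a + (Sb - b)) ((Ca - 1) * Sb).
have h5 := ler_normD (Sa - a) (Sb - b).
have h6 := ler_normD ((Sa - a) * Sb) (a * (Sb - b)).
rewrite -/t1 -/t2; lra.
Qed.

Lemma edge_bound (th D a b : R) (isx : bool) : 0 < D -> D < 1 ->
  [/\ `|a| <= 2 * D, `|sin a| <= 2 * D, `|cos a - 1| <= 4 * D ^+ 2,
      `|sin a - a| <= 8 * D ^+ 3 & `|cos a - 1 + a ^+ 2 / 2| <= 16 * D ^+ 3] ->
  [/\ `|b| <= 2 * D, `|sin b| <= 2 * D, `|cos b - 1| <= 4 * D ^+ 2,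
      `|sin b - b| <= 8 * D ^+ 3 & `|cos b - 1 + b ^+ 2 / 2| <= 16 * D ^+ 3] ->
  `|(- bond isx (evec (th + a)) (evec (th + b)) - 2^-1 * gw isx th * (a - b) ^+ 2)
     - (gg (cos th) (sin th) isx a + gg (cos th) (sin th) isx b)| <= 112 * D ^+ 3.
Proof.
move=> D0 D1 ha hb.
have B := XYZ_bound D0 D1 ha hb.
set X := XX _ _ _ _ _ _ in B *; set Y := YY _ _ _ _ _ _ in B *; set Z := ZZ _ _ _ _ _ _ in B *.
have c1 : `|cos th ^+ 2| <= 1 by rewrite normrX expr_le1 // cos_max.
have s1 : `|sin th ^+ 2| <= 1 by rewrite normrX expr_le1 // sin_max.
have cs1 : `|cos th * sin th| <= 1.
  by rewrite normrM -[1]mulr1 ler_pM // ?cos_max ?sin_max.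
have tri (u v w : R) (U V W : R) : `|U| <= 1 -> `|V| <= 1 -> `|W| <= 1 ->
    `|U * u + V * v + W * w| <= `|u| + `|v| + `|w|.
  move=> hU hV hW.
  apply: le_trans (ler_normD _ _) _; apply: lerD; last first.
    by rewrite normrM -[X in _ <= X]mul1r ler_pM.
  apply: le_trans (ler_normD _ _) _; apply: lerD.
    by rewrite normrM -[X in _ <= X]mul1r ler_pM.
  by rewrite normrM -[X in _ <= X]mul1r ler_pM.
apply: le_trans B.
case: isx; rewrite /bond /gw /evec /= ?cosD ?sinD.
- rewrite idx -/X -/Y -/Z.
  rewrite (_ : - cos th ^+ 2 * X + cos th * sin th * Y - sin th ^+ 2 * Z =
     (- cos th ^+ 2) * X + (cos th * sin th) * Y + (- sin th ^+ 2) * Z); last by ring.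
  by apply: tri; rewrite ?normrN.
- rewrite idz -/X -/Y -/Z.
  rewrite (_ : - sin th ^+ 2 * X - cos th * sin th * Y - cos th ^+ 2 * Z =
     (- sin th ^+ 2) * X + (- (cos th * sin th)) * Y + (- cos th ^+ 2) * Z); last by ring.
  by apply: tri; rewrite ?normrN.
Qed.

Lemma odd_ordS N (i : 'I_N) : ~~ odd N -> odd (ordS i) = ~~ odd i.
Proof.
move=> hN; rewrite /ordS /=; case: i => k /= hk.
move: hk; rewrite leq_eqVlt => /orP[/eqP e|lt].
  by rewrite e modnn /=; move: hN; rewrite -e /= => /negbNE ->.
by rewrite modn_small.
Qed.

End Helpers.

Theorem lemma4p4 (R : realType) (J : R) (hJ : 0 < J) :
  exists c : R, 0 < c /\
    forall (N : nat) (theta Delta : R) (vt : site N -> R),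
      (0 < N)%N -> ~~ odd N -> Delta < 1 ->
      (forall r, - pi < vt r <= pi) ->
      (forall r, dist2 (evec (theta + vt r)) (evec theta) < Delta) ->
      `| HN J (fun r => evec (theta + vt r)) + J * (N * N)%:R
         - J * GN theta vt |
        <= c * J * (N * N)%:R * Delta ^+ 3.
Proof.
exists 224; split => //.
move=> N th D vt N0 hN D1 hvt hd.
have SB r := site_bounds (hvt r) D1 (hd r).
have D0 : 0 < D by case: (SB (Ordinal N0, Ordinal N0)).
set c := cos th; set s := sin th.
have cs : c ^+ 2 + s ^+ 2 = 1 by exact: cos2Dsin2.
pose T1 r := - bond (xedge1 r) (evec (th + vt r)) (evec (th + vt (nb1 r)))
   - 2^-1 * gw (xedge1 r) th * (vt r - vt (nb1 r)) ^+ 2.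
pose T2 r := - bond (xedge2 r) (evec (th + vt r)) (evec (th + vt (nb2 r)))
   - 2^-1 * gw (xedge2 r) th * (vt r - vt (nb2 r)) ^+ 2.
pose G1 r := gg c s (xedge1 r) (vt r) + gg c s (xedge1 r) (vt (nb1 r)).
pose G2 r := gg c s (xedge2 r) (vt r) + gg c s (xedge2 r) (vt (nb2 r)).
have inj1 : injective (@nb1 N).
  move=> [x1 x2] [y1 y2] e.
  have e1 : ordS x1 = ordS y1 := congr1 fst e.
  have e2 : x2 = y2 := congr1 snd e.
  by rewrite (ordS_inj e1) e2.
have inj2 : injective (@nb2 N).
  move=> [x1 x2] [y1 y2] e.
  have e2 : ordS x2 = ordS y2 := congr1 snd e.
  have e1 : x1 = y1 := congr1 fst e.
  by rewrite (ordS_inj e2) e1.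
have sumG : \sum_(r : site N) (G1 r + G2 r) = - (N * N)%:R.
  rewrite /G1 /G2 big_split /= !big_split /=.
  have -> : \sum_(r : site N) gg c s (xedge1 r) (vt (nb1 r)) =
            \sum_(r : site N) gg c s (~~ xedge1 r) (vt r).
    rewrite [RHS](reindex_inj inj1); apply: eq_bigr => r _.
    by rewrite /xedge1 /= odd_ordS // negbK.
  have -> : \sum_(r : site N) gg c s (xedge2 r) (vt (nb2 r)) =
            \sum_(r : site N) gg c s (~~ xedge2 r) (vt r).
    rewrite [RHS](reindex_inj inj2); apply: eq_bigr => r _.
    by rewrite /xedge2 /= odd_ordS // negbK.
  rewrite -!big_split /=.
  under eq_bigr do rewrite !gg_sum //.
  by rewrite sumr_const card_prod !card_ord -[_ *+ (N * N)]mulr_natr natrM; field.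
have key : HN J (fun r => evec (th + vt r)) + J * (N * N)%:R - J * GN th vt
    = J * \sum_(r : site N) ((T1 r - G1 r) + (T2 r - G2 r)).
  have -> : \sum_(r : site N) ((T1 r - G1 r) + (T2 r - G2 r)) =
     \sum_(r : site N) (T1 r + T2 r) - \sum_(r : site N) (G1 r + G2 r).
    by rewrite -sumrB; apply: eq_bigr => r _; ring.
  rewrite sumG /HN /GN.
  have -> : \sum_(r : site N) (T1 r + T2 r) =
     - \sum_(r : site N) (bond (xedge1 r) (evec (th + vt r)) (evec (th + vt (nb1 r)))
                   + bond (xedge2 r) (evec (th + vt r)) (evec (th + vt (nb2 r))))
     - 2^-1 * \sum_(r : site N) (gw (xedge1 r) th * (vt r - vt (nb1 r)) ^+ 2
                   + gw (xedge2 r) th * (vt r - vt (nb2 r)) ^+ 2).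
    rewrite mulr_sumr -sumrN -sumrB; apply: eq_bigr => r _; rewrite /T1 /T2; ring.
  ring.
rewrite key normrM gtr0_norm //.
have hE r : `|T1 r - G1 r + (T2 r - G2 r)| <= 224 * D ^+ 3.
  have [_ ha] := SB r; have [_ hb1] := SB (nb1 r); have [_ hb2] := SB (nb2 r).
  have e1 := edge_bound th (xedge1 r) D0 D1 ha hb1.
  have e2 := edge_bound th (xedge2 r) D0 D1 ha hb2.
  apply: le_trans (ler_normD _ _) _.
  rewrite (_ : 224 * D ^+ 3 = 112 * D ^+ 3 + 112 * D ^+ 3); last by ring.
  exact: lerD.
have hS : `|\sum_(r : site N) (T1 r - G1 r + (T2 r - G2 r))| <= (224 * D ^+ 3) *+ (N * N).
  apply: le_trans (ler_norm_sum _ _ _) _.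
  apply: le_trans (ler_sum _ (fun r _ => hE r)) _.
  by rewrite sumr_const card_prod !card_ord.
apply: le_trans (ler_wpM2l (ltW hJ) hS) _.
by rewrite -mulr_natr le_eqVlt; apply/orP; left; apply/eqP; ring.
Qed.
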